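(* Let $\lambda\in(0,1)$ and let $G$ be a finite simple connected graph with $n$ vertices. Then $$\frac{\lambda^{n}-\lambda}{\lambda-1}\;\le\; mc^{e}_{\lambda}(G).$$ The lower bound is attained for the path $P_n$, at an end-vertex.
   Context: $d(u,v)$ denotes graph distance and $[u]$ the set of neighbours of $u$. For vertices $k,l$, $s^{kl}$ is the number of shortest $k$–$l$ paths and, for an edge $uv$, $s^{kl}_{uv}$ is the number of those passing through the edge $uv$. The exponential edge betweenness of an edge $uv$ is $b^{e}_{\lambda}(uv)=\sum_{\{k,l\}}\frac{s^{kl}_{uv}}{s^{kl}}\lambda^{d(k,l)}$ over all unordered pairs $\{k,l\}$ of distinct vertices; the exponential betweenness centrality of a vertex $u$ is $c^{e}_{\lambda}(u)=\sum_{v\in[u]}b^{e}_{\lambda}(uv)$; and $mc^{e}_{\lambda}(G)=\min\{c^{e}_{\lambda}(u):u\in V(G)\}$. *)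

(* Defs.v *)
From mathcomp Require Import all_boot all_order all_algebra.
Set Implicit Arguments. Unset Strict Implicit. Unset Printing Implicit Defensive.
Import Order.TTheory GRing.Theory Num.Theory.

Section Graphs.
Variables (T : finType) (e : rel T).

Definition simple_graph := symmetric e /\ irreflexive e.
Definition connected_graph := forall x y : T, connect e x y.

(* Walks from k to l with exactly m edges: t is the list of vertices after k. *)
Definition walks (k l : T) (m : nat) : {set m.-tuple T} :=
  [set t : m.-tuple T | path e k t && (last k t == l)].

(* Graph distance: least length of a k-l walk (#|T| if none exists). *)
Definition gdist (k l : T) : nat :=
  \big[minn/#|T|]_(m < #|T| | walks k l m != set0) m.

(* Shortest k-l paths are exactly the k-l walks of length d(k,l). *)
Definition nb_sp (k l : T) : nat := #|walks k l (gdist k l)|.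

Definition through (u v k : T) (t : seq T) : bool :=
  has (fun p => (p == (u, v)) || (p == (v, u))) (zip (k :: t) t).

Definition nb_sp_through (u v k l : T) : nat :=
  #|[set t in walks k l (gdist k l) | through u v k t]|.

Variable (R : realFieldType) (lam : R).
Local Open Scope ring_scope.

(* Sum over unordered pairs {k,l}, k <> l, written as half the ordered sum. *)
Definition exp_edge_betw (u v : T) : R :=
  (2%:R)^-1 * \sum_(k : T) \sum_(l : T | l != k)
     ((nb_sp_through u v k l)%:R / (nb_sp k l)%:R) * lam ^+ gdist k l.

Definition exp_betw_cent (u : T) : R := \sum_(v : T | e u v) exp_edge_betw u v.

(* Minimum over all vertices (the seed is some c(u); irrelevant if T nonempty). *)
Definition mc_exp : R :=
  \big[Num.min/head 0%R [seq exp_betw_cent u | u <- enum T]]_(u : T) exp_betw_cent u.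

End Graphs.

Definition path_graph (n : nat) : rel 'I_n :=
  fun i j => (i.+1 == j :> nat) || (j.+1 == i :> nat).
Arguments path_graph n : clear implicits.

(* Main.v *)
Require Import Defs.
From mathcomp Require Import all_boot all_order all_algebra ring zify.
Import Order.TTheory GRing.Theory Num.Theory.

Module PartA.
Set Implicit Arguments. Unset Strict Implicit. Unset Printing Implicit Defensive.

Section Dist.
Variables (T : finType) (e : rel T).

Lemma in_walks k l m (t : m.-tuple T) :
  (t \in walks e k l m) = path e k t && (last k t == l).
Proof. by rewrite inE. Qed.

Lemma gdist_le_card k l : (gdist e k l <= #|T|)%N.
Proof.
rewrite /gdist; elim/big_ind: _ => //.
- by move=> x y hx hy; rewrite geq_min hx.
- by move=> i _; apply: ltnW.
Qed.

Lemma gdist_attained k l : (gdist e k l < #|T|)%N ->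
  walks e k l (gdist e k l) != set0.
Proof.
rewrite /gdist.
elim/big_ind: _ => //.
- by rewrite ltnn.
- move=> x y hx hy.
  have [->|->] : minn x y = x \/ minn x y = y.
    by rewrite /minn; case: ltnP; auto.
  + exact: hx.
  + exact: hy.
Qed.

Lemma bigminn_le (I : eqType) (r : seq I) (P : pred I) (F : I -> nat) x0 i :
  i \in r -> P i -> (\big[minn/x0]_(j <- r | P j) F j <= F i)%N.
Proof.
elim: r => // a r IH; rewrite in_cons big_cons => /orP [/eqP <-|hi] hP.
- by rewrite hP geq_minl.
- case: (P a); last exact: IH.
  by rewrite geq_min IH ?orbT.
Qed.

Lemma gdist_min k l (s : seq T) : path e k s -> last k s = l ->
  (gdist e k l <= size s)%N.
Proof.
move=> hp hl.
case: (leqP #|T| (size s)) => hs.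
  exact: leq_trans (gdist_le_card k l) hs.
rewrite /gdist.
have hw : walks e k l (Ordinal hs) != set0.
  apply/set0Pn; exists (in_tuple s); by rewrite in_walks /= hp hl eqxx.
have := @bigminn_le _ (index_enum 'I_#|T|) (fun m : 'I_#|T| => walks e k l m != set0)
  (fun m => nat_of_ord m) #|T| (Ordinal hs) (mem_index_enum _) hw.
by [].
Qed.

Lemma walk_of k l : (gdist e k l < #|T|)%N ->
  exists s : seq T, [/\ path e k s, last k s = l & size s = gdist e k l].
Proof.
move=> /gdist_attained /set0Pn [t]; rewrite in_walks => /andP [hp /eqP hl].
by exists t; rewrite size_tuple.
Qed.

Lemma gdist_refl k : gdist e k k = 0%N.
Proof. by apply/eqP; rewrite -leqn0 (gdist_min (s:=[::])). Qed.

Lemma gdist_eq0 k l : gdist e k l = 0%N -> l = k.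
Proof.
move=> h0.
have hT : (0 < #|T|)%N by apply/card_gt0P; exists k.
have := walk_of (k:=k) (l:=l); rewrite h0 => /(_ hT) [s [_ hl hs]].
by case: s hl hs.
Qed.

Lemma last_take (x : T) (s : seq T) i : (i <= size s)%N ->
  last x (take i s) = nth x (x :: s) i.
Proof.
elim: s x i => [|y s IH] x [|i] //= hi.
rewrite IH //; apply: set_nth_default; by [].
Qed.

Lemma sp_prefix k l (s1 s2 : seq T) :
  path e k (s1 ++ s2) -> last k (s1 ++ s2) = l -> size (s1 ++ s2) = gdist e k l ->
  gdist e k (last k s1) = size s1.
Proof.
rewrite cat_path last_cat => /andP [hp1 hp2] hl hs.
apply/eqP; rewrite eqn_leq gdist_min //=.
rewrite leqNgt; apply/negP => hlt.
have hd := gdist_le_card k l.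
have hlt2 : (gdist e k (last k s1) < #|T|)%N.
  apply: (leq_trans hlt); apply: leq_trans hd; rewrite -hs size_cat; exact: leq_addr.
have [w [hw1 hw2 hw3]] := walk_of hlt2.
have : (gdist e k l <= size (w ++ s2))%N.
  apply: gdist_min; first by rewrite cat_path hw1 hw2 hp2.
  by rewrite last_cat hw2.
rewrite -hs !size_cat hw3 leq_add2r leqNgt hlt //.
Qed.

Lemma sp_nth k l (s : seq T) i :
  path e k s -> last k s = l -> size s = gdist e k l -> (i <= size s)%N ->
  gdist e k (nth k (k :: s) i) = i.
Proof.
move=> hp hl hs hi.
rewrite -(last_take k hi).
rewrite -(cat_take_drop i s) in hp hl hs.
rewrite (sp_prefix hp hl hs) size_take.
by move: hi; rewrite leq_eqVlt => /orP [/eqP ->|->]; rewrite ?ltnn.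
Qed.

End Dist.

End PartA.
Import PartA.
Module PartB.
Set Implicit Arguments. Unset Strict Implicit. Unset Printing Implicit Defensive.

Section Conn.
Variables (T : finType) (e : rel T).
Hypotheses (esym : symmetric e) (eirr : irreflexive e) (econn : connected_graph e).


Lemma gdist_lt k l : (gdist e k l < #|T|)%N.
Proof.
have /connectP [p hp hl] := econn k l.
case/shortenP: hp hl => p' hp' hu _ hl.
apply: (leq_ltn_trans (gdist_min hp' (Logic.eq_sym hl))).
have := max_card (mem (k :: p')).
by rewrite (card_uniqP hu).
Qed.

Lemma last_rev_belast (k : T) s : last (last k s) (rev (belast k s)) = k.
Proof.
case: s => [|y s] //=.
by rewrite rev_cons last_rcons.
Qed.

Lemma gdist_sym k l : gdist e k l = gdist e l k.
Proof.
suff H : forall k l, (gdist e l k <= gdist e k l)%N.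
  by apply/eqP; rewrite eqn_leq !H.
move=> x y.
have [s [hp hl hs]] := walk_of (gdist_lt x y).
rewrite -hs.
have -> : size s = size (rev (belast x s)) by rewrite size_rev size_belast.
apply: gdist_min; last by rewrite -hl last_rev_belast.
rewrite -hl rev_path.
by rewrite (@eq_path _ _ e) // => a b /=; rewrite esym.
Qed.

Lemma sp_dist k l (s : seq T) :
  path e k s -> last k s = l -> size s = gdist e k l ->
  map (gdist e k) s = iota 1 (size s).
Proof.
move=> hp hl hs.
apply: (@eq_from_nth _ 0%N); first by rewrite size_map size_iota.
move=> i; rewrite size_map => hi.
rewrite (nth_map k) // nth_iota // add1n.
have := sp_nth (i := i.+1) hp hl hs hi.
by [].
Qed.

End Conn.

End PartB.
Import PartB.
Module PartC.
Set Implicit Arguments. Unset Strict Implicit. Unset Printing Implicit Defensive.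

Section Through.
Variables (T : finType).

Lemma through_notin (u v k : T) s : u \notin k :: s -> ~~ through u v k s.
Proof.
elim: s k => [|x s IH] k //.
rewrite !in_cons negb_or => /andP [hk hx].
rewrite /through /= -/(through u v x s) negb_or !xpair_eqE.
rewrite IH ?in_cons ?hx //.
move: hx; rewrite negb_or => /andP [hx _].
by rewrite eq_sym (negbTE hk) [x == u]eq_sym (negbTE hx) !andbF.
Qed.

Lemma through_rcons (u v k : T) s x : through u v k (rcons s x) =
  [|| through u v k s, (last k s, x) == (u, v) | (last k s, x) == (v, u)].
Proof.
elim: s k => [|y s IH] k.
  by rewrite /through /= orbF.
rewrite /through /= -/(through u v y s) -/(through u v y (rcons s x)) IH.
by rewrite !orbA.
Qed.

Lemma count_nb (e : rel T) (u : T) (m : nat) (W : {set m.-tuple T})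
  (P : T -> m.-tuple T -> bool) (g : m.-tuple T -> T) :
  (forall t, t \in W -> e u (g t)) ->
  (forall t v, t \in W -> e u v -> P v t = (g t == v)) ->
  (\sum_(v | e u v) #|[set t in W | P v t]| = #|W|)%N.
Proof.
move=> hg hP.
rewrite (eq_bigr (fun v => \sum_(t in W) (P v t : nat))%N); last first.
  move=> v _; rewrite -sum1_card.
  rewrite (eq_bigl (fun t => (t \in W) && P v t)); last by move=> t; rewrite inE.
  by rewrite big_mkcondr.
rewrite exchange_big /= -sum1_card.
apply: eq_bigr => t ht.
rewrite (eq_bigr (fun v => (g t == v : nat))); last by move=> v hv; rewrite hP.
rewrite (bigD1 (g t)) ?hg //= eqxx big1 // => v /andP [_ hv].
by rewrite eq_sym (negbTE hv).
Qed.

End Through.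

End PartC.
Import PartC.
Module PartD.
Set Implicit Arguments. Unset Strict Implicit. Unset Printing Implicit Defensive.

Section NB.
Variables (T : finType) (e : rel T).
Hypotheses (esym : symmetric e) (eirr : irreflexive e) (econn : connected_graph e).

Lemma neq_of_edge u v : e u v -> (u == v) = false.
Proof. by apply: contraTF => /eqP ->; rewrite eirr. Qed.

Lemma gdist_pos k l : l != k -> (0 < gdist e k l)%N.
Proof.
move=> hl; rewrite lt0n; apply/eqP => /(gdist_eq0 (e:=e)) h.
by rewrite h eqxx in hl.
Qed.

Lemma nb_first u l : l != u ->
  (\sum_(v | e u v) nb_sp_through e u v u l = nb_sp e u l)%N.
Proof.
move=> hl.
apply: (count_nb (g := fun t => head u (tval t))).
- move=> t; rewrite in_walks => /andP [hp _].
  have hs := size_tuple t; have hpos := gdist_pos hl.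
  move: hp hs; case: (tval t) => [|x s] /=.
    by move=> _ hs; rewrite -hs in hpos.
  by case/andP.
- move=> t v; rewrite in_walks => /andP [hp /eqP hlast] huv.
  have hs := size_tuple t.
  have hd := sp_dist hp hlast hs.
  have hpos := gdist_pos hl.
  have hnu : u \notin tval t.
    apply/negP => hu.
    have := map_f (gdist e u) hu; rewrite hd mem_iota gdist_refl.
    by [].
  move: hp hnu hs; case: (tval t) => [|x s] /=.
    by move=> _ _ hs; rewrite -hs in hpos.
  move=> _ hnu _.
  rewrite /through /= -/(through u v x s).
  rewrite (negbTE (through_notin v hnu)) orbF !xpair_eqE eqxx /=.
  by rewrite (neq_of_edge huv) andFb orbF.
Qed.

Lemma nb_last u k : k != u ->
  (\sum_(v | e u v) nb_sp_through e u v k u = nb_sp e k u)%N.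
Proof.
move=> hk.
have hpos : (0 < gdist e k u)%N by apply: gdist_pos; rewrite eq_sym.
have key : forall t, t \in walks e k u (gdist e k u) ->
   exists s, [/\ tval t = rcons s u, u \notin k :: s & e (last k s) u].
  move=> t; rewrite in_walks => /andP [hp /eqP hlast].
  have hs := size_tuple t.
  move: hp hlast hs; case/lastP: (tval t) => [|s y].
    by move=> _ _ hs; rewrite -hs in hpos.
  rewrite last_rcons => hp hy hs; subst y.
  exists s; split => //; last by move: hp; rewrite rcons_path => /andP [].
  rewrite in_cons negb_or eq_sym hk /=.
  apply/negP => hu; move: hp hs; case/splitPr: hu => s1 s2 hp hs.
  have E : rcons (s1 ++ u :: s2) u = rcons s1 u ++ rcons s2 u.
    by rewrite rcons_cat cat_rcons.
  rewrite E in hp hs.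
  have hl : last k (rcons s1 u ++ rcons s2 u) = u by rewrite last_cat !last_rcons.
  have := sp_prefix hp hl hs.
  rewrite last_rcons -hs !size_cat !size_rcons => /eqP.
  by rewrite -{2}[(size s1).+1]addn0 eqn_add2l.
pose g := fun t : (gdist e k u).-tuple T => last k (belast k (tval t)).
apply: (count_nb (g := g)).
- move=> t /key [s [ht _ he]]; rewrite /g ht belast_rcons /=.
  by rewrite esym.
- move=> t v /key [s [ht hnu he]] huv; rewrite /g ht belast_rcons /=.
  rewrite through_rcons (negbTE (through_notin v hnu)) /= !xpair_eqE eqxx !andbT.
  have -> : (last k s == u) = false.
    by apply/negbTE; apply: contraNneq hnu => <-; rewrite mem_last.
  by [].
Qed.

End NB.

End PartD.
Import PartD.
Module PartE.
Set Implicit Arguments. Unset Strict Implicit. Unset Printing Implicit Defensive.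
Local Open Scope ring_scope.

Section Cent.
Variables (T : finType) (e : rel T).
Hypotheses (esym : symmetric e) (eirr : irreflexive e) (econn : connected_graph e).
Variables (R : realFieldType) (lam : R).

Lemma sum_split3 (u : T) (G : T -> T -> R) :
  \sum_k \sum_(l | l != k) G k l =
  \sum_(l | l != u) G u l + \sum_(k | k != u) G k u +
  \sum_(k | k != u) \sum_(l | (l != k) && (l != u)) G k l.
Proof.
rewrite (bigD1 u) //= -addrA; congr (_ + _).
rewrite -big_split /=; apply: eq_bigr => k hk.
by rewrite (bigD1 u) //= eq_sym.
Qed.

Lemma nb_sp_pos k l : (0 < nb_sp e k l)%N.
Proof.
rewrite /nb_sp card_gt0; apply: gdist_attained; exact: gdist_lt.
Qed.

Lemma ratio_first u l : l != u ->
  \sum_(v | e u v) (nb_sp_through e u v u l)%:R / (nb_sp e u l)%:R = 1 :> R.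
Proof.
move=> hl; rewrite -mulr_suml -natr_sum nb_first //.
by rewrite divff // pnatr_eq0 -lt0n nb_sp_pos.
Qed.

Lemma ratio_last u k : k != u ->
  \sum_(v | e u v) (nb_sp_through e u v k u)%:R / (nb_sp e k u)%:R = 1 :> R.
Proof.
move=> hk; rewrite -mulr_suml -natr_sum nb_last //.
by rewrite divff // pnatr_eq0 -lt0n nb_sp_pos.
Qed.

Definition Fw (u v k l : T) : R :=
  (nb_sp_through e u v k l)%:R / (nb_sp e k l)%:R * lam ^+ gdist e k l.

Lemma cent_formula u :
  exp_betw_cent e lam u = \sum_(l | l != u) lam ^+ gdist e u l +
    2%:R^-1 * \sum_(v | e u v) \sum_(k | k != u) \sum_(l | (l != k) && (l != u)) Fw u v k l.
Proof.
rewrite /exp_betw_cent /exp_edge_betw.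
rewrite (eq_bigr (fun v => 2%:R^-1 * (\sum_(l | l != u) Fw u v u l + \sum_(k | k != u) Fw u v k u +
  \sum_(k | k != u) \sum_(l | (l != k) && (l != u)) Fw u v k l))); last first.
  by move=> v _; rewrite (sum_split3 u).
rewrite -mulr_sumr !big_split /=.
have -> : \sum_(v | e u v) \sum_(l | l != u) Fw u v u l = \sum_(l | l != u) lam ^+ gdist e u l.
  rewrite exchange_big /=; apply: eq_bigr => l hl.
  by rewrite /Fw -mulr_suml ratio_first // mul1r.
have -> : \sum_(v | e u v) \sum_(k | k != u) Fw u v k u = \sum_(l | l != u) lam ^+ gdist e u l.
  rewrite exchange_big /=; apply: eq_bigr => l hl.
  by rewrite /Fw -mulr_suml ratio_last // mul1r gdist_sym.
have h2 : (2%:R : R) != 0 by rewrite pnatr_eq0.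
field.
done.
Qed.

End Cent.

End PartE.
Import PartE.
Module PartF.
Set Implicit Arguments. Unset Strict Implicit. Unset Printing Implicit Defensive.
Local Open Scope ring_scope.

Section Abel.
Variables (R : realFieldType).

Lemma abel1 (x : R) (d N : nat) : (d <= N)%N ->
  x ^+ d = x ^+ N + \sum_(j < N) (x ^+ j - x ^+ j.+1) * (d <= j)%N%:R.
Proof.
elim: N => [|N IH] hd.
  by move: hd; rewrite leqn0 => /eqP ->; rewrite big_ord0 addr0.
rewrite big_ord_recr /=.
move: hd; rewrite leq_eqVlt => /orP [/eqP ->|hd].
  rewrite big1 ?leqnn ?ltnn ?mulr0 ?addr0 ?add0r //.
  move=> j _; rewrite leqNgt.
  by rewrite (leq_trans (ltn_ord j) (leqnSn _)) mulr0.
have hd' : (d <= N)%N := hd.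
rewrite IH // hd' mulr1.
ring.
Qed.

Lemma card_sum (I : finType) (A : {set I}) (P : pred I) :
  (#|[set i in A | P i]| = \sum_(i in A) (P i : nat))%N.
Proof.
rewrite -sum1_card.
rewrite (eq_bigl (fun t => (t \in A) && P t)); last by move=> t; rewrite inE.
by rewrite big_mkcondr.
Qed.

Lemma abel (I : finType) (A : {set I}) (d : I -> nat) (N : nat) (x : R) :
  (forall i, i \in A -> (d i <= N)%N) ->
  \sum_(i in A) x ^+ d i = #|A|%:R * x ^+ N +
     \sum_(j < N) (x ^+ j - x ^+ j.+1) * #|[set i in A | (d i <= j)%N]|%:R.
Proof.
move=> hd.
rewrite (eq_bigr (fun i => x ^+ N + \sum_(j < N) (x ^+ j - x ^+ j.+1) * (d i <= j)%N%:R));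
  last by move=> i hi; rewrite -abel1 // hd.
rewrite big_split /= sumr_const; congr (_ + _).
  by rewrite mulr_natl.
rewrite exchange_big /=; apply: eq_bigr => j _.
by rewrite -mulr_sumr card_sum natr_sum.
Qed.

Lemma card_small (m j : nat) : (#|[set i : 'I_m | (i.+1 <= j)%N]| <= j)%N.
Proof.
rewrite cardE -(size_map val) -[j in (_ <= j)%N](size_iota 0 j).
apply: uniq_leq_size; first by rewrite (map_inj_uniq val_inj) enum_uniq.
move=> y /mapP [i]; rewrite mem_enum inE => hi ->.
by rewrite mem_iota.
Qed.

Lemma geom (lam : R) (m : nat) : lam != 1 ->
  (lam ^+ m.+1 - lam) / (lam - 1) = \sum_(i < m) lam ^+ i.+1.
Proof.
move=> hl.
have h1 : lam - 1 != 0 by rewrite subr_eq0.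
have -> : lam ^+ m.+1 - lam = (lam - 1) * \sum_(i < m) lam ^+ i.+1.
  rewrite (eq_bigr (fun i : 'I_m => lam * lam ^+ i)); last by move=> i _; rewrite exprS.
  rewrite -mulr_sumr mulrCA -subrX1 exprS.
  ring.
by rewrite mulrC mulrA mulVf ?mul1r.
Qed.

End Abel.

End PartF.
Import PartF.
Module PartG.
Set Implicit Arguments. Unset Strict Implicit. Unset Printing Implicit Defensive.

Section Lower.
Variables (T : finType) (e : rel T).
Hypotheses (esym : symmetric e) (eirr : irreflexive e) (econn : connected_graph e).

Lemma ball u j : (j < #|T|)%N ->
  (j <= #|[set l | (l != u) && (gdist e u l <= j)%N]|)%N.
Proof.
move=> hj.
case: (boolP [exists l, (l != u) && (j < gdist e u l)%N]) => [/existsP [l /andP [hl hjl]] | /existsPn hno].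
- have [s [hp hlast hs]] := walk_of (gdist_lt econn u l).
  have hd := sp_dist hp hlast hs.
  have hu : uniq (take j s).
    apply: take_uniq; apply: (@map_uniq _ _ (gdist e u)); rewrite hd; exact: iota_uniq.
  have hsz : size (take j s) = j by rewrite size_takel // hs ltnW.
  rewrite -{1}hsz -(card_uniqP hu).
  apply: subset_leq_card; apply/subsetP => x hx; rewrite inE.
  have := map_f (gdist e u) hx; rewrite map_take hd take_iota mem_iota => /andP [h1 h2].
  have -> : x != u by apply: contraTneq h1 => ->; rewrite gdist_refl.
  by rewrite /=; lia.
- apply: (@leq_trans #|T|.-1); first by lia.
  rewrite -(cardsC1 u); apply: subset_leq_card; apply/subsetP => l; rewrite !inE => hl.
  rewrite hl /=; have := hno l; rewrite hl /= -leqNgt; done.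
Qed.

Variables (R : realFieldType) (lam : R).
Local Open Scope ring_scope.
Hypotheses (hl0 : 0 <= lam) (hl1 : lam <= 1).

Lemma lower u :
  \sum_(i < #|T|.-1) lam ^+ i.+1 <= \sum_(l | l != u) lam ^+ gdist e u l.
Proof.
rewrite (eq_bigl (fun l => l \in [set l | l != u])); last by move=> l; rewrite inE.
rewrite (abel (N := #|T|)); last by move=> i _; exact: gdist_le_card.
rewrite (eq_bigl (fun i => i \in [set: 'I_#|T|.-1])); last by move=> i; rewrite inE.
rewrite (abel (d := fun i : 'I_#|T|.-1 => i.+1) (N := #|T|)); last first.
  move=> i _; have := ltn_ord i; lia.
have -> : #|[set l | l != u]| = #|T|.-1.
  by rewrite -(cardsC1 u); apply: eq_card => l; rewrite !inE.
rewrite cardsT card_ord lerD2l.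
apply: ler_sum => j _.
apply: ler_wpM2l.
  by rewrite subr_ge0 ler_wiXn2l.
rewrite ler_nat.
apply: (@leq_trans j).
  apply: leq_trans (card_small _ j); apply: subset_leq_card; apply/subsetP => i; rewrite !inE; done.
apply: leq_trans (ball u (ltn_ord j)) _; apply: subset_leq_card; apply/subsetP => i; rewrite !inE; done.
Qed.

End Lower.

End PartG.
Import PartG.
Module PartH.
Set Implicit Arguments. Unset Strict Implicit. Unset Printing Implicit Defensive.
Local Open Scope ring_scope.

Section Main.
Variables (T : finType) (e : rel T).
Hypotheses (esym : symmetric e) (eirr : irreflexive e) (econn : connected_graph e).
Variables (R : realFieldType) (lam : R).
Hypotheses (hl0 : 0 < lam) (hl1 : lam < 1).

Lemma Fw_ge0 u v k l : 0 <= Fw e lam u v k l.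
Proof.
rewrite /Fw; apply: mulr_ge0; last exact: exprn_ge0 (ltW hl0).
by apply: divr_ge0; rewrite ler0n.
Qed.

Lemma bound_eq : (0 < #|T|)%N ->
  (lam ^+ #|T| - lam) / (lam - 1) = \sum_(i < #|T|.-1) lam ^+ i.+1.
Proof.
move=> hT; rewrite -(prednK hT) geom //=; by rewrite lt_eqF.
Qed.

Lemma cent_ge u : (lam ^+ #|T| - lam) / (lam - 1) <= exp_betw_cent e lam u.
Proof.
have hT : (0 < #|T|)%N by apply/card_gt0P; exists u.
rewrite bound_eq // (cent_formula esym eirr econn) -[X in X <= _]addr0.
apply: lerD; first exact: (lower econn (ltW hl0) (ltW hl1)).
apply: mulr_ge0; first by rewrite invr_ge0 ler0n.
apply: sumr_ge0 => v _; apply: sumr_ge0 => k _; apply: sumr_ge0 => l _.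
exact: Fw_ge0.
Qed.

Lemma mc_ge : (0 < #|T|)%N -> (lam ^+ #|T| - lam) / (lam - 1) <= mc_exp e lam.
Proof.
move=> hT; rewrite /mc_exp.
elim/big_ind: _ => //.
- case E: (enum T) => [|a s] /=.
    by move: hT; rewrite cardE E.
  exact: cent_ge.
- by move=> x y hx hy; rewrite le_min hx hy.
- by move=> i _; exact: cent_ge.
Qed.

Lemma not_through_deg1 u w k l t :
  (forall v, e u v = (v == w)) -> k != u -> l != u ->
  t \in walks e k l (gdist e k l) -> ~~ through u w k t.
Proof.
move=> hdeg hk hl; rewrite in_walks => /andP [hp /eqP hlast].
have hs := size_tuple t.
apply: through_notin; rewrite in_cons negb_or eq_sym hk /=.
apply/negP => hu.
set i := index u t.
have hi : (i < size t)%N by rewrite index_mem.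
have hnth : nth k t i = u by rewrite nth_index.
have hi2 : (i.+1 < size t)%N.
  rewrite ltn_neqAle hi andbT; apply/negP => /eqP hE.
  move: hnth; rewrite -[i]/(i.+1.-1) hE nth_last hlast => hE2.
  by rewrite hE2 eqxx in hl.
have /pathP := hp => /(_ k) hP.
have ha : e u (nth k (k :: t) i) by rewrite esym -[X in e _ X]hnth; apply: hP.
have hb : e u (nth k (k :: t) i.+2) by rewrite /= -[X in e X _]hnth; apply: (hP i.+1).
rewrite !hdeg in ha hb.
have d1 := sp_nth (i := i) hp hlast hs (ltnW hi).
have d2 := sp_nth (i := i.+2) hp hlast hs hi2.
move: d1 d2; rewrite (eqP ha) (eqP hb) => -> /eqP.
by rewrite -[X in X == _]addn0 -addn2 eqn_add2l.
Qed.

Lemma cent_deg1 u w : (forall v, e u v = (v == w)) ->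
  exp_betw_cent e lam u = \sum_(l | l != u) lam ^+ gdist e u l.
Proof.
move=> hdeg; rewrite (cent_formula esym eirr econn).
rewrite [X in _ * X](eq_bigl (fun v => v == w)) // big_pred1_eq.
rewrite [X in _ * X]big1 ?mulr0 ?addr0 // => k hk; rewrite big1 // => l /andP [hlk hlu].
rewrite /Fw /nb_sp_through.
have -> : [set t in walks e k l (gdist e k l) | through u w k t] = set0.
  apply/setP => t; rewrite in_set in_set0.
  case ht: (t \in walks e k l (gdist e k l)) => //=.
  exact: negbTE (not_through_deg1 hdeg hk hlu ht).
by rewrite cards0 mul0r mul0r.
Qed.

Lemma min_le_term u : mc_exp e lam <= exp_betw_cent e lam u.
Proof.
rewrite /mc_exp.
have : u \in index_enum T by rewrite mem_index_enum.
elim: (index_enum T) => // a r IH; rewrite in_cons big_cons => /orP [/eqP <-|hi] /=.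
- by rewrite ge_min lexx.
- by rewrite ge_min IH ?orbT.
Qed.

End Main.

End PartH.
Import PartH.
Module PartI.
Set Implicit Arguments. Unset Strict Implicit. Unset Printing Implicit Defensive.

Lemma pg_sym n : symmetric (path_graph n).
Proof. by move=> i j; rewrite /path_graph orbC. Qed.

Lemma pg_irr n : irreflexive (path_graph n).
Proof. by move=> i; rewrite /path_graph orbb (gtn_eqF (ltnSn i)). Qed.

Lemma pg_conn n : connected_graph (path_graph n).
Proof.
case: n => [|n] x y; first by case: x.
have H : forall k, (k < n.+1)%N -> connect (path_graph n.+1) ord0 (inord k).
  elim=> [|k IH] hk.
    have -> : inord 0 = ord0 :> 'I_n.+1 by apply: val_inj; rewrite /= inordK.
    exact: connect0.
  apply: connect_trans (IH (ltnW hk)) (connect1 _).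
  by rewrite /path_graph !inordK ?eqxx // ltnW.
have hc := sym_connect_sym (@pg_sym n.+1).
apply: (@connect_trans _ _ ord0).
  by rewrite hc -(inord_val x); apply: H.
by rewrite -(inord_val y); apply: H.
Qed.

Lemma walk_bound n (x : 'I_n) s : path (path_graph n) x s ->
  (nat_of_ord (last x s) <= nat_of_ord x + size s)%N.
Proof.
elim: s x => [|y s IH] x /=; first by rewrite addn0.
case/andP => hxy /IH; rewrite /path_graph in hxy.
case/orP: hxy => /eqP h; lia.
Qed.

Lemma pg_dist n' (l : 'I_n'.+1) : (val l <= gdist (path_graph n'.+1) ord0 l)%N.
Proof.
have [s [hp hl hs]] := walk_of (gdist_lt (@pg_conn _) ord0 l).
rewrite -hs -hl; have := walk_bound hp; by [].
Qed.

End PartI.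
Import PartI.
Unset Implicit Arguments. Set Strict Implicit.
Local Open Scope ring_scope.

Theorem theorem6 (R : realFieldType) (lam : R) (n : nat) :
  0 < lam < 1 ->
  (forall (T : finType) (e : rel T),
      simple_graph e -> connected_graph e -> #|T| = n -> (0 < n)%N ->
      (lam ^+ n - lam) / (lam - 1) <= mc_exp e lam)
  /\
  ((0 < n)%N ->
      mc_exp (path_graph n) lam = (lam ^+ n - lam) / (lam - 1) /\
      (forall v : 'I_n, val v = 0%N ->
         exp_betw_cent (path_graph n) lam v = (lam ^+ n - lam) / (lam - 1))).
Proof.
case/andP => hl0 hl1.
split.
  move=> T e [hs hi] hc hT hn; rewrite -hT.
  by apply: mc_ge => //; rewrite hT.
case: n => [|n'] // _.
have hgt : forall u, (lam ^+ n'.+1 - lam) / (lam - 1) <= exp_betw_cent (path_graph n'.+1) lam u.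
  move=> u; have := cent_ge (@pg_sym _) (@pg_irr _) (@pg_conn _) hl0 hl1 u.
  by rewrite card_ord.
have hcent : exp_betw_cent (path_graph n'.+1) lam ord0 = (lam ^+ n'.+1 - lam) / (lam - 1).
  apply/le_anti; rewrite hgt andbT.
  case: n' hgt => [|m] hgt.
    rewrite expr1 subrr mul0r /exp_betw_cent big_pred0 // => v.
    by rewrite (ord1 v) pg_irr.
  have hdeg : forall v, path_graph m.+2 ord0 v = (v == inord 1).
    move=> v; rewrite /path_graph /= orbF -val_eqE /= inordK //; by rewrite eq_sym.
  rewrite (cent_deg1 (@pg_sym _) (@pg_irr _) (@pg_conn _) lam hdeg).
  rewrite geom; last by rewrite lt_eqF.
  apply: (@le_trans _ _ (\sum_(l : 'I_m.+2 | l != ord0) lam ^+ val l)).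
    apply: ler_sum => l _; apply: ler_wiXn2l; [exact: ltW | exact: ltW | exact: pg_dist].
  rewrite big_mkcond big_ord_recl /= add0r le_eqVlt; apply/orP; left; apply/eqP.
  by apply: eq_bigr => i _; rewrite /bump /= add1n.
split.
  apply/le_anti; rewrite -{1}hcent min_le_term /=.
  have hc : (0 < #|'I_n'.+1|)%N by rewrite card_ord.
  have := mc_ge (@pg_sym _) (@pg_irr _) (@pg_conn _) hl0 hl1 hc.
  by rewrite card_ord.
move=> v hv; have -> : v = ord0 by apply: val_inj.
exact: hcent.
Qed.
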